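(* Let $F=\{\mathbf{p}_0,\ldots,\mathbf{p}_n\}\subset\mathbb{R}^d$ be not contained in any $(d-1)$-dimensional affine subspace, let $\mathcal{D}=\{0,\ldots,n\}$, let $\lambda_i\in(0,1)$ for $i\in\mathcal{D}$, and let $S_i(\mathbf{x})=\lambda_i\mathbf{x}+(1-\lambda_i)\mathbf{p}_i$. Suppose $$\min_{A\subseteq\mathcal{D},\ \#A=d+1}\ \sum_{i\in A}\lambda_i\ \ge\ d.$$ Then the unique non-empty compact set $X$ with $X=\bigcup_{i\in\mathcal{D}}S_i(X)$ equals $\mathrm{conv}(F)$.
   Context: $\mathrm{conv}(F)$ denotes the convex hull of $F$. *)

(* Defs.v *)
From HB Require Import structures.
From mathcomp Require Import all_boot all_order all_algebra.
From mathcomp Require Import all_classical all_reals all_analysis.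
Import numFieldNormedType.Exports.
Set Implicit Arguments.
Unset Strict Implicit.
Unset Printing Implicit Defensive.
Import Order.TTheory GRing.Theory Num.Theory.
Local Open Scope classical_set_scope.
Local Open Scope ring_scope.

Definition is_convex (R : realType) (d : nat) (C : set 'rV[R]_d) : Prop :=
  forall x y t, C x -> C y -> 0 <= t -> t <= 1 -> C (t *: x + (1 - t) *: y).

Definition conv_hull (R : realType) (d : nat) (F : set 'rV[R]_d) : set 'rV[R]_d :=
  [set x | forall C, is_convex C -> F `<=` C -> C x].

Definition dotv (R : realType) (d : nat) (u v : 'rV[R]_d) : R :=
  \sum_(k < d) u ord0 k * v ord0 k.

Definition simil (R : realType) (d : nat) (lam : R) (p x : 'rV[R]_d) : 'rV[R]_d :=
  lam *: x + (1 - lam) *: p.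

Definition ifs_invariant (R : realType) (d n : nat)
  (lam : 'I_n.+1 -> R) (p : 'I_n.+1 -> 'rV[R]_d) (X : set 'rV[R]_d) : Prop :=
  X = \bigcup_(i in [set: 'I_n.+1]) (simil (lam i) (p i) @` X).

(* Main.v *)
Require Import Defs.
Set Warnings "-notation-overridden,-ambiguous-paths,-notation-incompatible-prefix,-deprecated".
From HB Require Import structures.
From mathcomp Require Import all_boot all_order all_algebra.
From mathcomp Require Import all_classical all_reals all_analysis.
From mathcomp Require Import ring lra zify.
Import numFieldNormedType.Exports.
Import Order.TTheory GRing.Theory Num.Theory.
Local Open Scope classical_set_scope.
Local Open Scope ring_scope.

Lemma convex_comb (R : realType) d (C : set 'rV[R]_d) : is_convex C ->
  forall m (mu : 'I_m -> R) (q : 'I_m -> 'rV[R]_d), (forall i, 0 <= mu i) ->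
  (forall i, C (q i)) -> 0 < \sum_i mu i ->
  C ((\sum_i mu i)^-1 *: \sum_i mu i *: q i).
Proof.
move=> cC; elim=> [|m IH] mu q mu0 Cq.
  by rewrite big_ord0 ltxx.
rewrite !big_ord_recr /=.
set S := \sum_(i < m) mu (widen_ord _ i).
set V := \sum_(i < m) mu (widen_ord _ i) *: q (widen_ord _ i).
have S0 : 0 <= S by apply: sumr_ge0.
rewrite le_eqVlt in S0; case/orP: S0 => [/eqP Sz|Sp] Hp.
  have V0 : V = 0.
    rewrite /V big1 // => i _.
    by rewrite (psumr_eq0P (fun i _ => mu0 (widen_ord (leqnSn m) i)) (esym Sz)) ?scale0r.
  rewrite V0 -Sz !add0r scalerA mulVf ?scale1r //.
  by rewrite -Sz add0r in Hp; rewrite gt_eqF.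
have Cw := IH (fun i => mu (widen_ord (leqnSn m) i)) (fun i => q (widen_ord (leqnSn m) i))
  (fun i => mu0 _) (fun i => Cq _) Sp.
rewrite -/S -/V in Cw.
have Hne : S + mu ord_max != 0 by rewrite gt_eqF.
have HS : S != 0 by rewrite gt_eqF.
have t0 : 0 <= S / (S + mu ord_max) by rewrite divr_ge0 // ltW.
have t1 : S / (S + mu ord_max) <= 1.
  by rewrite ler_pdivrMr // mul1r lerDl.
have := cC _ _ _ Cw (Cq ord_max) t0 t1.
congr C; rewrite scalerDr !scalerA; congr (_ *: _ + _ *: _).
  by field; rewrite Hne HS.
by field; rewrite Hne.
Qed.

Definition cc (R : realType) d n (p : 'I_n.+1 -> 'rV[R]_d) (z : 'rV[R]_d) :=
  exists mu : 'I_n.+1 -> R,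
    [/\ forall i, 0 <= mu i, \sum_i mu i = 1 & \sum_i mu i *: p i = z].
Arguments cc {R d n} p z.

Lemma sum_delta {R : realType} {V : lmodType R} {n} (f : 'I_n.+1 -> V) i :
  \sum_j (j == i)%:R *: f j = f i.
Proof.
rewrite (bigD1 i) //= eqxx scale1r big1 ?addr0 // => j /negbTE ->.
by rewrite scale0r.
Qed.

Lemma sum_delta' {R : realType} {n} (f : 'I_n.+1 -> R) i :
  \sum_j f j * (j == i)%:R = f i.
Proof.
rewrite (bigD1 i) //= eqxx mulr1 big1 ?addr0 // => j /negbTE ->.
by rewrite mulr0.
Qed.

Lemma cc_convex (R : realType) d n (p : 'I_n.+1 -> 'rV[R]_d) : is_convex (cc p).
Proof.
move=> x y t [mu [mu0 mu1 mux]] [nu [nu0 nu1 nuy]] t0 t1.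
exists (fun i => t * mu i + (1 - t) * nu i); split.
- by move=> i; rewrite addr_ge0 // mulr_ge0 // subr_ge0.
- by rewrite big_split /= -!mulr_sumr mu1 nu1 !mulr1 addrC subrK.
- rewrite -mux -nuy !scaler_sumr -big_split /=; apply: eq_bigr => i _.
  by rewrite !scalerA scalerDl.
Qed.

Lemma cc_p {R : realType} d n (p : 'I_n.+1 -> 'rV[R]_d) i : cc p (p i).
Proof.
exists (fun j => (j == i)%:R); split.
- by move=> j; rewrite ler0n.
- by rewrite (bigD1 i) //= eqxx big1 ?addr0 // => j /negbTE ->.
- exact: sum_delta.
Qed.

Lemma conv_cc (R : realType) d n (p : 'I_n.+1 -> 'rV[R]_d) :
  conv_hull [set x | exists i, x = p i] = cc p.
Proof.
apply/seteqP; split => z.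
  move=> /(_ (cc p) (@cc_convex _ _ _ p)); apply => x [i ->]; exact: cc_p.
move=> [mu [mu0 mu1 <-]] C cC FC.
have := @convex_comb _ _ _ cC _ mu p mu0 (fun i => FC (p i) (ex_intro _ i erefl)).
by rewrite mu1 invr1 scale1r ltr01; apply.
Qed.

Lemma dep {R : realType} {I : finType} {m} (w : I -> 'rV[R]_m) : (m < #|I|)%N ->
  exists c : I -> R, (exists i, c i != 0) /\ \sum_i c i *: w i = 0.
Proof.
move=> hm.
pose M := \matrix_(j < #|I|) w (enum_val j).
have hK : kermx M != 0.
  apply/eqP => K0; have := mxrank_ker M; rewrite K0 mxrank0.
  have := rank_leq_col M; lia.
have [j hj] : exists j, row j (kermx M) != 0.
  case: (pickP (fun j => row j (kermx M) != 0)) => [j hj|h]; first by exists j.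
  case/negP: hK; apply/eqP/row_matrixP => j; rewrite row0.
  by move: (h j) => /negbFE/eqP.
set v := row j (kermx M) in hj.
have v0 : v *m M = 0 by rewrite /v -row_mul mulmx_ker row0.
have [k hk] : exists k, v 0 k != 0.
  case: (pickP (fun k => v 0 k != 0)) => [k hk|h]; first by exists k.
  case/negP: hj; apply/eqP/rowP => k; rewrite [RHS]mxE.
  by move: (h k) => /negbFE/eqP.
exists (fun i => v 0 (enum_rank i)); split.
  by exists (enum_val k); rewrite enum_valK.
rewrite -[RHS]v0 mulmx_sum_row.
rewrite (reindex (fun k : 'I_#|I| => enum_val k)) /=; last first.
  by exists enum_rank => x _; [exact: enum_valK | exact: enum_rankK].
apply: eq_bigr => i _; rewrite enum_valK; congr (_ *: _).
by rewrite rowK.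
Qed.

Lemma d_le_n {R : realType} d n (p : 'I_n.+1 -> 'rV[R]_d) :
  (forall (a : 'rV[R]_d) (b : R), (forall i, dotv a (p i) = b) -> a = 0) ->
  (d <= n)%N.
Proof.
move=> hsp; rewrite leqNgt; apply/negP => hnd.
have hI : (n < #|'I_d|)%N by rewrite card_ord.
have [c [[k ck] hc]] := dep
  (fun k : 'I_d => \row_(j < n) (p (lift ord0 j) 0 k - p ord0 0 k)) hI.
have a0 : forall i, dotv (\row_k c k) (p i) = dotv (\row_k c k) (p ord0).
  move=> i; case: (unliftP ord0 i) => [j ->|->] //.
  apply/eqP; rewrite -subr_eq0 /dotv -sumrB.
  have := congr1 (fun M : 'rV[R]_n => M 0 j) hc; rewrite /= summxE [RHS]mxE => h.
  apply/eqP; rewrite -[RHS]h; apply: eq_bigr => l _; rewrite !mxE mulrBr.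
  by [].
move: (hsp _ _ a0) => /rowP /(_ k); rewrite !mxE => ck0.
by rewrite ck0 eqxx in ck.
Qed.

Lemma regroup {R : realType} {V : lmodType R} {I J : finType} (h : J -> I)
  (c : J -> R) (F : I -> V) :
  \sum_i (\sum_(k | h k == i) c k) *: F i = \sum_k c k *: F (h k).
Proof.
rewrite [RHS](partition_big h predT) //=; apply: eq_bigr => i _.
rewrite scaler_suml; apply: eq_big => // k /eqP ->.
by [].
Qed.

Lemma regroup1 {R : realType} {I J : finType} (h : J -> I) (c : J -> R) :
  \sum_i (\sum_(k | h k == i) c k) = \sum_k c k.
Proof.
by rewrite [RHS](partition_big h predT).
Qed.

Local Close Scope classical_set_scope.
Lemma extend {T : finType} (s : {set T}) k : (#|s| <= k <= #|T|)%N ->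
  exists A : {set T}, s \subset A /\ #|A| = k.
Proof.
elim: k => [|k IH] /andP [h1 h2].
  by exists s; split => //; apply/eqP; rewrite -leqn0.
case: (ltnP k #|s|) => hk.
  by exists s; split => //; apply/eqP; rewrite eqn_leq h1 hk.
have [A [sA cA]] : exists A : {set T}, s \subset A /\ #|A| = k.
  by apply: IH; rewrite hk; apply: ltnW.
have : #|~: A| != 0%N by have := cardsC A; lia.
rewrite cards_eq0 => /set0Pn [x]; rewrite inE => xA.
exists (x |: A); split; first by apply: (fintype.subset_trans sA); exact: finset.subsetUr.
by rewrite cardsU1 xA cA.
Qed.

Lemma carath {R : realType} {d n} (p : 'I_n.+1 -> 'rV[R]_d) z : cc p z ->
  exists mu : 'I_n.+1 -> R, [/\ forall i, 0 <= mu i, \sum_i mu i = 1,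
    \sum_i mu i *: p i = z & (#|[set i | mu i != 0%R]| <= d.+1)%N].
Proof.
move=> [mu0 [h0 h1 h2]].
suff H : forall m mu, [/\ forall i, 0 <= mu i, \sum_i mu i = 1,
    \sum_i mu i *: p i = z & (#|[set i | mu i != 0%R]| <= m)%N] ->
  exists mu : 'I_n.+1 -> R, [/\ forall i, 0 <= mu i, \sum_i mu i = 1,
    \sum_i mu i *: p i = z & (#|[set i | mu i != 0%R]| <= d.+1)%N].
  by apply: (H _ mu0); split.
elim=> [|m IH] mu [m0 m1 m2 ms].
  by exists mu; split => //; apply: leq_trans ms _.
set S := [set i | mu i != 0] in ms.
case: (leqP #|S| d.+1) => hS; first by exists mu.
have hI : ((d + 1) < #|'I_(#|S|)|)%N by rewrite card_ord addn1.
pose w := fun k : 'I_(#|S|) => row_mx (p (enum_val k)) (1 : 'rV[R]_1).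
have [c' [[k0 ck0] hc']] := dep w hI.
pose c i := \sum_(k < #|S| | enum_val k == i) c' k.
have cS : forall i, i \notin S -> c i = 0.
  move=> i iS; rewrite /c big_pred0 // => k.
  by apply/negbTE; apply: contraNneq iS => <-; exact: enum_valP.
have ck0' : c (enum_val k0) = c' k0.
  rewrite /c (eq_bigl (fun k => k == k0)) ?big_pred1_eq // => k.
  by apply/eqP/eqP => [/enum_val_inj|->].
have cp : \sum_i c i *: p i = 0.
  rewrite regroup; have := congr1 lsubmx hc'; rewrite linear_sum linear0 /= => h.
  rewrite -[RHS]h; apply: eq_bigr => k _; rewrite linearZ /= row_mxKl //.
have c1 : \sum_i c i = 0.
  rewrite regroup1; have := congr1 (fun M => rsubmx M 0 0) hc'.
  rewrite /= linear_sum /= linear0 summxE mxE => h.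
  rewrite -[RHS]h.
  by apply: eq_bigr => k _; rewrite linearZ /= row_mxKr !mxE mulr1.
have cnz : c (enum_val k0) != 0 by rewrite ck0'.
have [i0 ci0] : exists i, 0 < c i.
  case: (pickP (fun i => 0 < c i)) => [i hi|h]; first by exists i.
  have hle : forall i, 0 <= - c i.
    by move=> i; rewrite oppr_ge0 leNgt; move: (h i) => /= ->.
  have := psumr_eq0P (fun i _ => hle i).
  move=> /(_ predT); rewrite sumrN c1 oppr0 => /(_ erefl (enum_val k0) erefl) /eqP.
  by rewrite oppr_eq0 (negbTE cnz).
case: (@arg_minP _ R _ i0 (fun i => 0 < c i) (fun i => mu i / c i) ci0)
  => j cj jmin.
set t := mu j / c j.
have t0 : 0 <= t by rewrite divr_ge0 // ltW.
apply: (IH (fun i => mu i - t * c i)); split.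
- move=> i; rewrite subr_ge0; case: (ltrP 0 (c i)) => hc.
    by rewrite -ler_pdivlMr //; exact: jmin.
  by apply: le_trans (m0 i); rewrite mulr_ge0_le0.
- by rewrite sumrB -mulr_sumr c1 mulr0 subr0.
  have -> : \sum_i (mu i - t * c i) *: p i =
      \sum_i mu i *: p i - t *: \sum_i c i *: p i.
    rewrite scaler_sumr -sumrB; apply: eq_bigr => i _.
    by rewrite scalerA scalerBl.
  by rewrite cp scaler0 subr0.
- have jS : j \in S.
    rewrite inE; apply: contraTneq cj => mj.
    by rewrite cS ?ltxx // /S inE mj eqxx.
  have sub : [set i | mu i - t * c i != 0] \subset S :\ j.
    apply/fintype.subsetP => i; rewrite !inE => hi; apply/andP; split.
      apply: contraNneq hi => ->; rewrite /t divfK ?subrr //.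
      by rewrite gt_eqF.
    apply: contraNneq hi => mi; rewrite mi cS ?mulr0 ?subrr // inE mi eqxx //.
  apply: leq_trans (subset_leq_card sub) _.
  move: ms; rewrite (cardsD1 j S) jS; lia.
Qed.

Local Open Scope classical_set_scope.

Local Close Scope classical_set_scope.
Lemma cc_cover {R : realType} {d n} (p : 'I_n.+1 -> 'rV[R]_d) (lam : 'I_n.+1 -> R) :
  (d <= n)%N -> (forall i, 0 < lam i < 1) ->
  (forall A : {set 'I_n.+1}, #|A| = d.+1 -> d%:R <= \sum_(i in A) lam i) ->
  forall z, cc p z -> exists i w, cc p w /\ z = simil (lam i) (p i) w.
Proof.
move=> hdn hl hA z /carath [mu [m0 m1 m2 ms]].
have hk : (#|[set i | mu i != 0%R]| <= d.+1 <= #|'I_n.+1|)%N.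
  by rewrite ms card_ord ltnS hdn.
have [A [sA cA]] := extend _ _ hk.
have muA : forall i, i \notin A -> mu i = 0.
  move=> i iA; apply/eqP; apply: contraNT iA => mi.
  by apply: (fintype.subsetP sA); rewrite inE.
have [x xA] : exists x, x \in A.
  apply/set0Pn; rewrite -cards_eq0 cA //.
have [i [iA hi]] : exists i, i \in A /\ 1 - lam i <= mu i.
  case: (pickP (fun i => (i \in A) && (1 - lam i <= mu i))) => [i /andP[]|h].
    by move=> iA hi; exists i.
  have lt : forall i, i \in A -> mu i < 1 - lam i.
    by move=> i iA; move: (h i); rewrite iA /= => /negbT; rewrite -ltNge.
  have : \sum_(i in A) mu i < \sum_(i in A) (1 - lam i).
    apply: ltr_sum => //; apply/hasP; exists x => //; exact: mem_index_enum.
  rewrite sumrB sumr_const cA mulrSr.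
  have -> : \sum_(i in A) mu i = 1.
    by rewrite -m1 [RHS](bigID (mem A)) /= [X in _ = _ + X]big1 ?addr0 // => j /muA.
  have := hA A cA; lra.
have li := hl i; case/andP: li => l0 l1.
have lne : lam i != 0 by rewrite gt_eqF.
exists i, ((lam i)^-1 *: (z - (1 - lam i) *: p i)); split; last first.
  by rewrite /simil scalerA mulfV // scale1r subrK.
exists (fun j => (mu j - (1 - lam i) * (j == i)%:R) / lam i); split.
- move=> j; apply: divr_ge0; last exact: ltW; rewrite subr_ge0.
  by case: (eqVneq j i) => [->|]; rewrite ?mulr1 // mulr0.
- rewrite -mulr_suml sumrB m1 sum_delta' opprB addrC subrK mulfV //.
- have -> : z - (1 - lam i) *: p i =
      \sum_j (mu j - (1 - lam i) * (j == i)%:R) *: p j.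
    rewrite -m2 -[X in _ - _ *: X](sum_delta p i) scaler_sumr -sumrB.
    by apply: eq_bigr => j _; rewrite scalerA -scalerBl.
  rewrite [RHS]scaler_sumr; apply: eq_bigr => j _; by rewrite scalerA mulrC.
Qed.
Local Open Scope classical_set_scope.

Lemma shrink {R : realType} {d n} (p : 'I_n.+1 -> 'rV[R]_d) (lam : 'I_n.+1 -> R)
  (c : R) (A B : set 'rV[R]_d) :
  (forall i, 0 <= lam i <= c) ->
  (forall a, A a -> exists i a', A a' /\ a = simil (lam i) (p i) a') ->
  (forall i b, B b -> B (simil (lam i) (p i) b)) ->
  forall k a b, A a -> B b -> exists a' b' L,
    [/\ A a', B b', 0 <= L, L <= c ^+ k & a - b' = L *: (a' - b)].
Proof.
move=> hl hA hB; elim=> [|k IH] a b Aa Bb.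
  by exists a, b, 1; split => //; rewrite ?expr0 ?scale1r.
have [i [a1 [Aa1 ->]]] := hA a Aa.
have [a' [b1 [L [Aa' Bb1 L0 Lc e]]]] := IH a1 b Aa1 Bb.
have /andP [li lc] := hl i.
exists a', (simil (lam i) (p i) b1), (lam i * L); split => //.
- exact: hB.
- exact: mulr_ge0.
- by rewrite exprS; apply: ler_pM.
- by rewrite /simil -scalerA -e opprD addrACA subrr addr0 scalerBr.
Qed.

Lemma approx {R : realType} {d n} (p : 'I_n.+1 -> 'rV[R]_d) (lam : 'I_n.+1 -> R)
  (c M : R) (A B : set 'rV[R]_d) b0 :
  0 <= c < 1 -> (forall i, 0 <= lam i <= c) ->
  (forall a, A a -> exists i a', A a' /\ a = simil (lam i) (p i) a') ->
  (forall i b, B b -> B (simil (lam i) (p i) b)) ->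
  (forall a, A a -> `|a| <= M) -> closed B -> B b0 -> A `<=` B.
Proof.
move=> /andP [c0 c1] hl hA hB hM cB Bb0 a Aa.
have -> : B = closure B by apply/closure_id.
move=> N /nbhs_ballP [e /= e0 sub].
have M0 : 0 <= M by apply: le_trans (hM a Aa).
set K := M + `|b0| + 1.
have K0 : 0 < K by rewrite /K ltr_wpDl // addr_ge0.
have hc : `|c| < 1 by rewrite ger0_norm.
have := cvgr_dist_lt _ _ (cvg_expr hc) _ (divr_gt0 e0 K0).
case=> k _ /(_ k (leqnn k)) /=; rewrite sub0r normrN ger0_norm ?exprn_ge0 // => hk.
have [a' [b' [L [Aa' Bb' L0 Lc eq]]]] := @shrink _ _ _ p lam c A B hl hA hB k a b0 Aa Bb0.
exists b'; split => //; apply: sub.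
rewrite -ball_normE /ball_ /= eq normrZ ger0_norm //.
apply: (le_lt_trans (y := c ^+ k * K)).
  apply: ler_pM => //.
  have := hM a' Aa'; have := ler_normB a' b0; rewrite /K; lra.
by rewrite -ltr_pdivlMr.
Qed.

Lemma cont_sum {R : realType} {m} {V : normedModType R} (I : finType)
  (F : I -> 'rV[R]_m -> V) :
  (forall i, continuous (F i)) -> continuous (fun v => \sum_i F i v).
Proof.
move=> cF; rewrite -fct_sumE.
apply: (big_ind (fun f : 'rV[R]_m -> V => continuous f)) => //.
- exact: cst_continuous.
- by move=> f g cf cg x; exact: (continuousD (cf x) (cg x)).
Qed.

Lemma cc_compact {R : realType} {d n} (p : 'I_n.+1 -> 'rV[R]_d) : compact (cc p).
Proof.
pose L := fun v : 'rV[R]_n.+1 => \sum_i v 0 i *: p i.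
pose D := [set v : 'rV[R]_n.+1 | forall i, `[(0:R), 1]%classic (v 0 i)] `&`
          ((fun v : 'rV[R]_n.+1 => \sum_i v 0 i) @^-1` [set x | x = 1]).
have cD : compact D.
  apply: compact_closedI.
    have := @rV_compact R n.+1 (fun _ => `[(0:R), 1]%classic) (fun _ => @segment_compact R 0 1).
    by [].
  apply: preimage_closed; last exact: closed_eq.
  move=> v _; apply: cont_sum => i; exact: coord_continuous.
have cL : continuous L.
  apply: cont_sum => i v; apply: continuousZr_tmp; exact: coord_continuous.
have -> : cc p = [set L v | v in D].
  apply/seteqP; split => z.
    move=> [mu [m0 m1 m2]]; exists (\row_i mu i).
      split => /=.
        move=> i; rewrite mxE /= in_itv /= m0 /=.
        by rewrite -m1 (bigD1 i) //= lerDl sumr_ge0.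
      by rewrite -m1; apply: eq_bigr => i _; rewrite mxE.
    by rewrite /L -m2; apply: eq_bigr => i _; rewrite mxE.
  move=> [v [hv h1] <-]; exists (fun i => v 0 i); split => //.
  by move=> i; have := hv i; rewrite /= in_itv /= => /andP[].
apply: continuous_compact => //; exact: continuous_subspaceT.
Qed.

Lemma bnd {R : realType} {d} (A : set 'rV[R]_d) : compact A ->
  exists M, forall a, A a -> `|a| <= M.
Proof.
move=> /compact_bounded; rewrite /bounded_near; case=> M [Mr HM].
exists (M + 1) => a Aa; apply: (HM (M + 1)) => //.
by rewrite ltrDl ltr01.
Qed.

Lemma cc_stable {R : realType} {d n} (p : 'I_n.+1 -> 'rV[R]_d) (l : R) i w :
  0 <= l <= 1 -> cc p w -> cc p (simil l (p i) w).
Proof.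
move=> /andP [l0 l1] cw; rewrite /simil.
exact: (@cc_convex R d n p _ _ _ cw (cc_p _ _ p i) l0 l1).
Qed.

Local Close Scope classical_set_scope.
Local Close Scope ring_scope.
Local Open Scope classical_set_scope.
Local Open Scope ring_scope.

Theorem lemma2p4 (R : realType) (d n : nat)
  (p : 'I_n.+1 -> 'rV[R]_d) (lam : 'I_n.+1 -> R) :
  injective p ->
  (* F is not contained in any (d-1)-dimensional affine subspace (hyperplane) *)
  (forall (a : 'rV[R]_d) (b : R), (forall i, dotv a (p i) = b) -> a = 0) ->
  (forall i, 0 < lam i < 1) ->
  (forall A : {set 'I_n.+1}, #|A| = d.+1 -> d%:R <= \sum_(i in A) lam i) ->
  let F := [set x | exists i, x = p i] in
  [/\ conv_hull F !=set0, compact (conv_hull F), ifs_invariant lam p (conv_hull F)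
    & forall X : set 'rV[R]_d,
        X !=set0 -> compact X -> ifs_invariant lam p X -> X = conv_hull F].
Proof.
move=> pinj hsp hl hA F.
have hdn := d_le_n d n p hsp.
have KE : conv_hull F = cc p by exact: conv_cc.
have hl1 : forall i, 0 <= lam i <= 1.
  by move=> i; have /andP [h1 h2] := hl i; rewrite ltW // ltW.
have stK : forall i b, cc p b -> cc p (simil (lam i) (p i) b).
  by move=> i b; apply: cc_stable.
have covK : forall a, cc p a -> exists i a', cc p a' /\ a = simil (lam i) (p i) a'.
  exact: cc_cover.
set c := \big[Order.max/0]_i lam i.
have lc : forall i, 0 <= lam i <= c.
  move=> i; have /andP [h1 _] := hl1 i; rewrite h1 /=.
  exact: le_bigmax.
have c01 : 0 <= c < 1.
  apply/andP; split; first by have /andP [h h'] := lc ord0; apply: le_trans h h'.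
  by apply: bigmax_lt => // i _; have /andP [_ h] := hl i.
have cK := @cc_compact R d n p.
have clK : closed (cc p) by apply: compact_closed => //; exact: norm_hausdorff.
rewrite KE; split.
- by exists (p ord0); exact: cc_p.
- exact: cK.
- rewrite /ifs_invariant; apply/seteqP; split => z.
    move=> /covK [i [w [cw ->]]]; exists i => //; exists w => //.
  by move=> [i _ [w cw <-]]; exact: stK.
move=> X [x0 Xx0] cX hX.
have covX : forall a, X a -> exists i a', X a' /\ a = simil (lam i) (p i) a'.
  move=> a Xa; move: Xa; rewrite {1}hX => -[i _ [a' Xa' <-]].
  by exists i, a'.
have stX : forall i b, X b -> X (simil (lam i) (p i) b).
  move=> i b Xb; rewrite hX; exists i => //; exists b => //.
have clX : closed X by apply: compact_closed => //; exact: norm_hausdorff.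
apply/seteqP; split.
  have [M hM] := bnd X cX.
  exact: (@approx R d n p lam c M X (cc p) (p ord0) c01 lc covX stK hM clK (cc_p _ _ p ord0)).
have [M hM] := bnd _ cK.
exact: (@approx R d n p lam c M (cc p) X x0 c01 lc covK stX hM clX Xx0).
Qed.
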